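(* Let $T\in\mathrm{Aut}(X,\mu)$ be an aperiodic transformation with infinite dynamical entropy and let $U\in[T]$ be such that the $T$-cocycle of $U$ has finite Shannon entropy. Then $U$ has infinite dynamical entropy. Consequently, if two aperiodic transformations are Shannon orbit equivalent, one has finite dynamical entropy if and only if the other does.
   Context: $(X,\mu)$ is a standard atomless probability space, $\mathrm{Aut}(X,\mu)$ its group of measure-preserving transformations modulo null sets. For aperiodic $T$, $[T]$ is the set of $U\in\mathrm{Aut}(X,\mu)$ with $U(x)=T^{c_U(x)}(x)$ for a (unique) measurable $c_U:X\to\mathbb Z$, the $T$-cocycle. The Shannon entropy of measurable $f:X\to I$, $I$ countable, is $H(f)=-\sum_i\mu(f^{-1}\{i\})\log\mu(f^{-1}\{i\})$. A measurable $f:X\to I$ ($I$ countable) is $T$-dynamically generating if there is a conull $X_0$ such that for all distinct $x,y\in X_0$ there is $n\in\mathbb Z$ with $f(T^nx)\ne f(T^ny)$. The dynamical entropy of $T$ is the infimum of $H(f)$ over $T$-dynamically generating $f$. Shannon orbit equivalence of aperiodic $T_1,T_2$: there is $S\in\mathrm{Aut}(X,\mu)$ with $ST_1S^{-1}$, $T_2$ having the same orbits and both cocycles ($T_2$-cocycle of $ST_1S^{-1}$, $ST_1S^{-1}$-cocycle of $T_2$) of finite Shannon entropy. *)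

(* Defs.v *)
From HB Require Import structures.
From mathcomp Require Import all_boot all_order all_algebra.
From mathcomp Require Import all_classical all_reals all_analysis.
Set Implicit Arguments. Unset Strict Implicit. Unset Printing Implicit Defensive.
Import Order.TTheory GRing.Theory Num.Theory.
Local Open Scope classical_set_scope.
Local Open Scope ring_scope.

Section Defs.
Context {R : realType} {d : measure_display} {X : measurableType d}.
Variable mu : probability X R.

Definition ae_holds (P : X -> Prop) : Prop := mu.-negligible [set x | ~ P x].

(** (X, mu) is a standard atomless probability space: it is isomorphic mod 0
    to the unit interval with Lebesgue measure. *)
Definition standard_atomless : Prop :=
  exists (phi : X -> R) (psi : R -> X),
    [/\ measurable_fun setT phi,
        measurable_fun (`[0%R, 1%R] : set (measurableTypeR R)) psi,
        (forall A : set (measurableTypeR R), measurable A ->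
           mu (phi @^-1` A) = lebesgue_measure (A `&` `[0%R, 1%R])),
        ae_holds (fun x => psi (phi x) = x) &
        (lebesgue_measure).-negligible
           [set t : R | t \in `[0%R, 1%R] /\ phi (psi t) <> t] ].

(** A measure-preserving transformation, represented by a genuine measurable
    bijection T with measurable inverse Ti (every element of Aut(X,mu) has
    such a representative). *)
Definition mp_aut (T Ti : X -> X) : Prop :=
  [/\ measurable_fun setT T, measurable_fun setT Ti,
      cancel T Ti, cancel Ti T &
      forall A, measurable A -> mu (T @^-1` A) = mu A].

Definition zpow (T Ti : X -> X) (n : int) (x : X) : X :=
  match n with
  | Posz k => iter k T x
  | Negz k => iter k.+1 Ti x
  end.

Definition aperiodic (T Ti : X -> X) : Prop :=
  ae_holds (fun x => forall n : int, n != 0 -> zpow T Ti n x <> x).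

Definition cmeasurable (I : countType) (f : X -> I) : Prop :=
  forall i : I, measurable (f @^-1` [set i]).

Definition ent_term (p : R) : R := if p == 0 then 0 else - (p * ln p).

Definition shannon (I : countType) (f : X -> I) : \bar R :=
  (\esum_(i in [set: I]) (ent_term (fine (mu (f @^-1` [set i]))))%:E)%R.

Definition dyn_generating (T Ti : X -> X) (I : countType) (f : X -> I) : Prop :=
  exists X0 : set X, mu.-negligible (~` X0) /\
    forall x y, X0 x -> X0 y -> x <> y ->
      exists n : int, f (zpow T Ti n x) <> f (zpow T Ti n y).

Definition dyn_entropy (T Ti : X -> X) : \bar R :=
  ereal_inf [set e | exists (I : countType) (f : X -> I),
     [/\ cmeasurable f, dyn_generating T Ti f & e = shannon f]].

Definition is_cocycle (T Ti U : X -> X) (c : X -> int) : Prop :=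
  cmeasurable c /\ ae_holds (fun x => U x = zpow T Ti (c x) x).

Definition in_full_group (T Ti U : X -> X) : Prop :=
  exists c : X -> int, is_cocycle T Ti U c.

Definition same_orbits (T Ti U Ui : X -> X) : Prop :=
  ae_holds (fun x => forall y, (exists n, zpow T Ti n x = y) <->
                               (exists m, zpow U Ui m x = y)).

Definition shannon_oe (T1 T1i T2 T2i : X -> X) : Prop :=
  exists S Si : X -> X, mp_aut S Si /\
    let T1' := S \o T1 \o Si in
    let T1'i := S \o T1i \o Si in
    [/\ same_orbits T1' T1'i T2 T2i,
        exists c : X -> int, is_cocycle T2 T2i T1' c /\ (shannon c < +oo)%E &
        exists c : X -> int, is_cocycle T1' T1'i T2 c /\ (shannon c < +oo)%E].

End Defs.

(* Main.v *)
Require Import Defs.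
From HB Require Import structures.
From mathcomp Require Import all_boot all_order all_algebra.
From mathcomp Require Import all_classical all_reals all_analysis.
From Stdlib Require Import Classical.
From mathcomp Require Import zify ring lra.
Import Order.TTheory GRing.Theory Num.Theory.
Local Open Scope classical_set_scope.
Local Open Scope ring_scope.

Section Zpow.
Variables (d : measure_display) (X : measurableType d) (T Ti : X -> X).
Hypotheses (TK : cancel T Ti) (TiK : cancel Ti T).

Lemma zpow0 x : zpow T Ti 0 x = x. Proof. by []. Qed.

Lemma zpowS (n : int) x : zpow T Ti (n + 1) x = T (zpow T Ti n x).
Proof.
case: n => [k|k].
  by have -> : (Posz k + 1 = Posz k.+1)%R by lia.
case: k => [|k]; first by rewrite /= TiK.
have -> : (Negz k.+1 + 1 = Negz k)%R by rewrite !NegzE; lia.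
by rewrite /= TiK.
Qed.

Lemma zpowP (n : int) x : zpow T Ti (n - 1) x = Ti (zpow T Ti n x).
Proof. by rewrite -[in RHS](subrK 1 n) zpowS TK. Qed.

Lemma zpow_add (a b : int) x : zpow T Ti a (zpow T Ti b x) = zpow T Ti (a + b) x.
Proof.
case: a => [k|k].
  elim: k => [|k IH]; first by rewrite add0r.
  have -> : (Posz k.+1 + b = (Posz k + b) + 1)%R by lia.
  by rewrite zpowS -IH /= .
elim: k => [|k IH].
  have -> : (Negz 0 + b = b - 1)%R by rewrite NegzE; lia.
  by rewrite zpowP.
have -> : (Negz k.+1 + b = (Negz k + b) - 1)%R by rewrite !NegzE; lia.
by rewrite zpowP -IH.
Qed.

Lemma zpowK (a : int) x : zpow T Ti (- a) (zpow T Ti a x) = x.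
Proof. by rewrite zpow_add addNr. Qed.

End Zpow.

Section Meas.
Variables (R : realType) (d : measure_display) (X : measurableType d).
Variable mu : probability X R.

Lemma mp_meas_pre (F : X -> X) (A : set X) :
  measurable_fun setT F -> measurable A -> measurable (F @^-1` A).
Proof. by move=> mF mA; rewrite -[_ @^-1` _]setTI; apply: mF. Qed.

Lemma mp_inv (T Ti : X -> X) : mp_aut mu T Ti ->
  forall A, measurable A -> mu (Ti @^-1` A) = mu A.
Proof.
move=> [mT mTi TK TiK Tp] A mA.
rewrite -Tp; last exact: mp_meas_pre.
by congr (mu _); apply/seteqP; split => x /=; rewrite TK.
Qed.
Arguments mp_inv {T Ti}.

Lemma mp_aut_sym (T Ti : X -> X) : mp_aut mu T Ti -> mp_aut mu Ti T.
Proof.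
move=> h; have := mp_inv h; case: h => mT mTi TK TiK Tp Tip.
by split.
Qed.

Lemma neg_pre {F : X -> X} {N : set X} : measurable_fun setT F ->
  (forall A, measurable A -> mu (F @^-1` A) = mu A) ->
  mu.-negligible N -> mu.-negligible (F @^-1` N).
Proof.
move=> mF Fp [B [mB B0 NB]]; exists (F @^-1` B); split.
- exact: mp_meas_pre.
- by rewrite Fp.
- by move=> x /= /NB.
Qed.

Lemma neg_iter (F : X -> X) (N : set X) k : measurable_fun setT F ->
  (forall A, measurable A -> mu (F @^-1` A) = mu A) ->
  mu.-negligible N -> mu.-negligible (iter k F @^-1` N).
Proof.
move=> mF Fp; elim: k N => [|k IH] N hN //.
exact: (IH (F @^-1` N) (neg_pre mF Fp hN)).
Qed.

Lemma neg_zpow (T Ti : X -> X) (N : set X) n : mp_aut mu T Ti ->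
  mu.-negligible N -> mu.-negligible (zpow T Ti n @^-1` N).
Proof.
move=> h hN; have Tip := mp_inv h; case: h => mT mTi _ _ Tp.
case: n => k.
  exact: neg_iter.
exact: neg_iter.
Qed.

Lemma neg_bigcup_int (F : int -> set X) :
  (forall n, mu.-negligible (F n)) -> mu.-negligible (\bigcup_n F n).
Proof.
move=> hF.
apply: (@negligibleS _ _ _ mu ((\bigcup_k F (Posz k)) `|` (\bigcup_k F (Negz k)))).
  by move=> x [[k|k] _ Fx]; [left|right]; exists k.
by apply: negligibleU; apply: negligible_bigcup => k; apply: hF.
Qed.

End Meas.


Lemma ent_bound (R : realType) (r p q : R) : 0 <= r -> r <= p -> r <= q ->
  ent_term r <= r * (- ln p) + r * (- ln q) + p * q.
Proof.
move=> r0 rp rq; rewrite /ent_term; have [->|rn0] := eqVneq r 0.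
  rewrite !mul0r !add0r; apply: mulr_ge0; lra.
have rpos : 0 < r by rewrite lt_neqAle eq_sym rn0.
have pp : 0 < p by lra.
have qp : 0 < q by lra.
have tp : 0 < p * q / r by rewrite divr_gt0 // mulr_gt0.
have h1 : ln (p * q / r) <= p * q / r - 1.
  have := expR_ge1Dx (ln (p * q / r)); rewrite lnK ?posrE //; lra.
have h2 : ln (p * q / r) = ln p + ln q - ln r.
  rewrite lnM ?posrE ?mulr_gt0 ?invr_gt0 // lnM ?posrE // lnV ?posrE //.
have h3 : r * (ln p + ln q - ln r) <= p * q - r.
  rewrite -h2; have := ler_wpM2l (ltW rpos) h1.
  by rewrite mulrBr mulr1 mulrCA mulrV ?mulr1 ?unitfE.
nra.
Qed.

Lemma ent_termE (R : realType) (p : R) : ent_term p = p * (- ln p).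
Proof. by rewrite /ent_term; case: eqP => [->|]; rewrite ?mul0r ?mulrN. Qed.

Section Ent.
Variables (R : realType) (d : measure_display) (X : measurableType d).
Variable mu : probability X R.

Lemma muE (A : set X) : measurable A -> mu A = (fine (mu A))%:E.
Proof. by move=> mA; rewrite fineK// fin_num_measure. Qed.

Lemma fine_ge0 (A : set X) : 0 <= fine (mu A).
Proof. by apply: fine_ge0; apply: measure_ge0. Qed.

Lemma fine_le1 (A : set X) : measurable A -> fine (mu A) <= 1.
Proof. by move=> mA; rewrite -lee_fin -muE// probability_le1. Qed.

Lemma esum_part (J : choiceType) (F : J -> set X) (A : set X) (a : R) :
  0 <= a -> measurable A -> (forall j, measurable (F j)) ->
  (forall j, F j `<=` A) -> trivIset setT F ->
  (\esum_(j in [set: J]) (a * fine (mu (F j)))%:E <= (a * fine (mu A))%:E)%E.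
Proof.
move=> a0 mA mF FA tF; apply: ge_ereal_sup => _ [Y [finY _] <-].
rewrite (eq_fsbigr (fun j => (a%:E * mu (F j))%E)); last first.
  by move=> j _; rewrite EFinM -muE.
rewrite -ge0_mule_fsumr; last by move=> j; apply: measure_ge0.
rewrite -measure_fin_bigcup//; last by apply: sub_trivIset tF.
rewrite EFinM -muE//; apply: lee_wpmul2l; first by rewrite lee_fin.
apply: le_measure; rewrite ?inE//.
  by apply: fin_bigcup_measurable.
by move=> x [j _ /FA].
Qed.


Lemma setTXR (I J : Type) : [set: I * J] = [set: I] `*`` (fun _ => [set: J]).
Proof. by apply/seteqP; split. Qed.

Lemma esum_pairs1 (I J : choiceType) (F : I -> J -> set X) (A : I -> set X)
  (a : I -> R) :
  (forall i, 0 <= a i) -> (forall i, measurable (A i)) ->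
  (forall i j, measurable (F i j)) -> (forall i j, F i j `<=` A i) ->
  (forall i, trivIset setT (F i)) ->
  (\esum_(k in [set: I * J]) (a k.1 * fine (mu (F k.1 k.2)))%:E <=
   \esum_(i in [set: I]) (a i * fine (mu (A i)))%:E)%E.
Proof.
move=> a0 mA mF FA tF.
rewrite setTXR -(esum_esum (a := fun i j => (a i * fine (mu (F i j)))%:E)); last first.
  by move=> i j _ _; rewrite lee_fin mulr_ge0 // fine_ge0.
by apply: le_esum => i _; apply: esum_part.
Qed.

Lemma esum_swap (I J : choiceType) (h : I * J -> \bar R) :
  \esum_(k in [set: I * J]) h k = \esum_(k in [set: J * I]) h (k.2, k.1).
Proof.
apply: (reindex_esum [set: J * I] [set: I * J] (fun k : J * I => (k.2, k.1)) h).
rewrite setTT_bijective; exists (fun k : I * J => (k.2, k.1)); by case.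
Qed.


Lemma shannon_pair (I J : countType) (f : X -> I) (c : X -> J) :
  cmeasurable f -> cmeasurable c -> (shannon mu f < +oo)%E ->
  (shannon mu c < +oo)%E ->
  (shannon mu (fun x => (f x, c x)) < +oo)%E.
Proof.
move=> mf mc hf hc.
pose A := fun i => f @^-1` [set i]. pose B := fun j => c @^-1` [set j].
have preE (k : I * J) : (fun x => (f x, c x)) @^-1` [set k] = A k.1 `&` B k.2.
  case: k => i j; apply/seteqP; split => x; rewrite /A /B /=.
    by case=> -> ->.
  by case=> -> ->.
have mA i : measurable (A i) by apply: mf.
have mB j : measurable (B j) by apply: mc.
have tA : trivIset setT A.
  by move=> i i' _ _ [x [/= h1 h2]]; rewrite -h1 -h2.
have tB : trivIset setT B.
  by move=> i i' _ _ [x [/= h1 h2]]; rewrite -h1 -h2.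
have tAB i : trivIset setT (fun j => A i `&` B j).
  by move=> j j' _ _ [x [[_ h1] [_ h2]]]; apply: tB => //; exists x.
have tBA j : trivIset setT (fun i => A i `&` B j).
  by move=> i i' _ _ [x [[h1 _] [h2 _]]]; apply: tA => //; exists x.
have mAB i j : measurable (A i `&` B j) by apply: measurableI.
have lnp (E : set X) : measurable E -> 0 <= - ln (fine (mu E)).
  by move=> mE; rewrite oppr_ge0 ln_le0 // fine_le1.
rewrite /shannon.
apply: (le_lt_trans (y := (\esum_(k in [set: I * J])
   ((fine (mu (A k.1 `&` B k.2)) * - ln (fine (mu (A k.1))))%:E +
    (fine (mu (A k.1 `&` B k.2)) * - ln (fine (mu (B k.2))))%:E +
    (fine (mu (A k.1)) * fine (mu (B k.2)))%:E))%E)).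
  apply: le_esum => k _; rewrite preE -!EFinD lee_fin; apply: ent_bound.
  - exact: fine_ge0.
  - rewrite -lee_fin -!muE //; apply: le_measure; rewrite ?inE //.
  - rewrite -lee_fin -!muE //; apply: le_measure; rewrite ?inE //.
rewrite esumD; first last.
- by move=> k _; rewrite lee_fin mulr_ge0 // fine_ge0.
- by move=> k _; rewrite adde_ge0 // lee_fin mulr_ge0 // ?fine_ge0 ?lnp.
rewrite esumD; first last.
- by move=> k _; rewrite lee_fin mulr_ge0 // ?fine_ge0 ?lnp.
- by move=> k _; rewrite lee_fin mulr_ge0 // ?fine_ge0 ?lnp.
apply: lte_add_pinfty; first apply: lte_add_pinfty.
- apply: (le_lt_trans _ hf).
  rewrite (eq_esum (b := fun k => ((- ln (fine (mu (A k.1)))) *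
           fine (mu (A k.1 `&` B k.2)))%:E)); last by move=> k _; rewrite mulrC.
  apply: (le_trans (@esum_pairs1 I J (fun i j => A i `&` B j) A (fun i => - ln (fine (mu (A i)))) (fun i => lnp _ (mA i)) mA mAB (fun i j => @subIsetl _ _ _) tAB)).
  by apply: le_esum => i _; rewrite ent_termE mulrC.
- apply: (le_lt_trans _ hc).
  rewrite esum_swap.
  rewrite (eq_esum (b := fun k => ((- ln (fine (mu (B k.1)))) *
           fine (mu (A k.2 `&` B k.1)))%:E)); last by move=> k _; rewrite mulrC.
  apply: (le_trans (@esum_pairs1 J I (fun j i => A i `&` B j) B (fun j => - ln (fine (mu (B j)))) (fun j => lnp _ (mB j)) mB (fun j i => mAB i j) (fun j i => @subIsetr _ _ _) tBA)).
  by apply: le_esum => i _; rewrite ent_termE mulrC.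
- apply: (le_lt_trans (y := ((1 : R) * fine (mu [set: X]))%:E)); last exact: ltry.
  apply: (le_trans (@esum_pairs1 I J (fun i j => B j) (fun _ => setT) (fun i => fine (mu (A i))) (fun i => fine_ge0 _) (fun _ => measurableT) (fun i j => mB j) (fun i j => @subsetT _ _) (fun i => tB))).
  rewrite probability_setT /= (eq_esum (b := fun i => (1 * fine (mu (A i)))%:E)).
    by have := @esum_part I A setT 1 ler01 measurableT mA (fun i => @subsetT _ _) tA; rewrite probability_setT.
  by move=> i _; rewrite mulr1 mul1r.
Qed.

End Ent.

Set Implicit Arguments. Unset Strict Implicit.

Section Part1.
Variables (R : realType) (d : measure_display) (X : measurableType d).
Variable mu : probability X R.

Lemma pair_gen (T Ti U Ui : X -> X) (c : X -> int) (I : countType) (f : X -> I) :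
  mp_aut mu T Ti -> mp_aut mu U Ui -> is_cocycle mu T Ti U c ->
  dyn_generating mu U Ui f -> dyn_generating mu T Ti (fun x => (f x, c x)).
Proof.
move=> hT hU [mc hc] [X0 [nX0 hX0]].
have hT' := hT; case: hT' => mT mTi TK TiK Tp.
have hU' := hU; case: hU' => mU mUi UK UiK Up.
have zadd := @zpow_add _ _ T Ti TK TiK.
have zK := @zpowK _ _ T Ti TK TiK.
pose zp := zpow T Ti.
pose G := [set x | X0 x /\
   (forall n, U (zp n x) = zp (c (zp n x)) (zp n x)) /\
   (forall n, U (Ui (zp n x)) = zp (c (Ui (zp n x))) (Ui (zp n x)))].
exists G; split.
  pose Nc := [set x | ~ U x = zpow T Ti (c x) x].
  have nNc : mu.-negligible Nc by apply: hc.
  apply: (@negligibleS _ _ _ mu ((~` X0 `|` \bigcup_n (zp n @^-1` Nc)) `|`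
      \bigcup_n (zp n @^-1` (Ui @^-1` Nc)))).
    move=> x /= nG.
    case: (classic (X0 x)) => hx0; last by left; left.
    case: (classic (forall n, U (zp n x) = zp (c (zp n x)) (zp n x))) => h1.
      right; apply: NNPP => h2; apply: nG; split => //; split => // n.
      by apply: NNPP => h3; apply: h2; exists n.
    left; right; have [n hn] := not_all_ex_not _ _ h1; by exists n.
  apply: negligibleU; first apply: negligibleU => //.
    by apply: neg_bigcup_int => n; apply: neg_zpow.
  apply: neg_bigcup_int => n; apply: neg_zpow => //.
  by apply: neg_pre => //; apply: (@mp_inv _ _ _ mu _ _ hU).
move=> x y [X0x [Cx Dx]] [X0y [Cy Dy]] nxy.
apply: NNPP => H.
have agree n : f (zp n x) = f (zp n y) /\ c (zp n x) = c (zp n y).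
  case: (classic ((f (zp n x), c (zp n x)) = (f (zp n y), c (zp n y)))).
    by case=> -> ->.
  by move=> hne; exfalso; apply: H; exists n.
have step m : exists m', Ui (zp m x) = zp m' x /\ Ui (zp m y) = zp m' y.
  set z := Ui (zp m x).
  have hz := Dx m; rewrite -/z in hz.
  have Uz : U z = zp m x by rewrite /z UiK.
  have zE : z = zp (- c z + m) x.
    by rewrite /zp -zadd -/(zp m x) -Uz hz /zp zK.
  exists (- c z + m); split => //.
  have cw : c (zp (- c z + m) y) = c z by rewrite -(agree _).2 -zE.
  have := Cy (- c z + m); rewrite cw /zp zadd.
  have -> : c z + (- c z + m) = m by lia.
  by move=> <-; rewrite UK.
have hUk (k : int) : exists m, zpow U Ui k x = zp m x /\ zpow U Ui k y = zp m y.
  case: k => k.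
    elim: k => [|k [m [hx hy]]]; first by exists 0.
    exists (c (zp m x) + m).
    change (U (zpow U Ui (Posz k) x) = zp (c (zp m x) + m) x /\
            U (zpow U Ui (Posz k) y) = zp (c (zp m x) + m) y).
    rewrite hx hy Cx Cy (agree m).2 /zp -!zadd; split => //.
  elim: k => [|k [m [hx hy]]]; first by have := step 0.
  have [m' [h1 h2]] := step m; exists m'.
  change (Ui (zpow U Ui (Negz k) x) = zp m' x /\
          Ui (zpow U Ui (Negz k) y) = zp m' y).
  by rewrite hx hy.
have [k hk] := hX0 x y X0x X0y nxy.
apply: hk; have [m [-> ->]] := hUk k; exact: (agree m).1.
Qed.


Lemma part1 (T Ti U Ui : X -> X) (c : X -> int) :
  mp_aut mu T Ti -> mp_aut mu U Ui -> is_cocycle mu T Ti U c ->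
  (shannon mu c < +oo)%E -> dyn_entropy mu T Ti = +oo%E ->
  dyn_entropy mu U Ui = +oo%E.
Proof.
move=> hT hU hcoc hcf hinf.
have [//|hne] := eqVneq (dyn_entropy mu U Ui) +oo%E.
have hlt : (dyn_entropy mu U Ui < +oo)%E by rewrite ltey.
have [e [I [f [mf gf ->]]] hfe] := ereal_inf_lt hlt.
have mc : cmeasurable c by case: hcoc.
have h1 : (dyn_entropy mu T Ti <= shannon mu (fun x => (f x, c x)))%E.
  apply: ereal_inf_lbound; exists _, (fun x => (f x, c x)); split => //.
    case=> i j.
    have -> : (fun x => (f x, c x)) @^-1` [set (i, j)] =
              f @^-1` [set i] `&` c @^-1` [set j].
      by apply/seteqP; split => x /=; [case=> -> -> | case=> -> ->].
    by apply: measurableI.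
  exact: (pair_gen hT hU hcoc gf).
have h2 := @shannon_pair _ _ _ mu _ _ f c mf mc hfe hcf.
by have := le_lt_trans h1 h2; rewrite hinf ltxx.
Qed.

Lemma iter_conj (S Si F : X -> X) : cancel S Si -> cancel Si S ->
  forall k x, iter k (S \o F \o Si) x = S (iter k F (Si x)).
Proof.
move=> SK SiK; elim=> [|k IH] x /=; first by rewrite SiK.
by rewrite IH SK.
Qed.

Lemma zpow_conj (S Si T Ti : X -> X) : cancel S Si -> cancel Si S ->
  forall n x, zpow (S \o T \o Si) (S \o Ti \o Si) n x = S (zpow T Ti n (Si x)).
Proof. by move=> SK SiK [k|k] x; apply: iter_conj. Qed.

Lemma dyn_conj_le (S Si T Ti : X -> X) : mp_aut mu S Si ->
  (dyn_entropy mu (S \o T \o Si) (S \o Ti \o Si) <= dyn_entropy mu T Ti)%E.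
Proof.
move=> hS; have hS' := hS; case: hS' => mS mSi SK SiK Sp.
apply: le_ereal_inf_tmp => _ [I [f [mf [X0 [n0 h0]]] ->]].
apply: ereal_inf_lbound; exists I, (f \o Si); split.
- by move=> i; apply: (@mp_meas_pre d X Si _ mSi (mf i)).
- exists (Si @^-1` X0); split.
    exact: (@neg_pre _ _ _ mu _ _ mSi (@mp_inv _ _ _ mu _ _ hS) n0).
  move=> x y hx hy nxy.
  have nxy' : Si x <> Si y by move=> /(congr1 S); rewrite !SiK.
  have [n hn] := h0 _ _ hx hy nxy'; exists n.
  by rewrite /= !zpow_conj //= !SK.
- rewrite /shannon; apply: eq_esum => i _.
  have -> : (f \o Si) @^-1` [set i] = Si @^-1` (f @^-1` [set i]) by [].
  by rewrite (@mp_inv _ _ _ mu _ _ hS).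
Qed.

Lemma dyn_conj_eq (S Si T Ti : X -> X) : mp_aut mu S Si ->
  dyn_entropy mu (S \o T \o Si) (S \o Ti \o Si) = dyn_entropy mu T Ti.
Proof.
move=> hS; apply/eqP; rewrite eq_le dyn_conj_le //=.
have hS' := hS; case: hS' => mS mSi SK SiK Sp.
have back (F : X -> X) : Si \o (S \o F \o Si) \o S = F.
  by apply: funext => x /=; rewrite !SK.
have := @dyn_conj_le Si S (S \o T \o Si) (S \o Ti \o Si) (@mp_aut_sym _ _ _ mu _ _ hS).
by rewrite !back.
Qed.

Lemma aper_conj (S Si T Ti : X -> X) : mp_aut mu S Si -> aperiodic mu T Ti ->
  aperiodic mu (S \o T \o Si) (S \o Ti \o Si).
Proof.
move=> hS hA; have hS' := hS; case: hS' => mS mSi SK SiK Sp.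
apply: (negligibleS _ (@neg_pre _ _ _ mu _ _ mSi (@mp_inv _ _ _ mu _ _ hS) hA)).
move=> x /= hx hgood; apply: hx => n n0 e.
apply: (hgood n n0).
by move: e; rewrite zpow_conj // => /(congr1 Si); rewrite SK.
Qed.

Lemma mp_conj (S Si T Ti : X -> X) : mp_aut mu S Si -> mp_aut mu T Ti ->
  mp_aut mu (S \o T \o Si) (S \o Ti \o Si).
Proof.
move=> hS hT; have hS' := hS; case: hS' => mS mSi SK SiK Sp.
have hT' := hT; case: hT' => mT mTi TK TiK Tp.
split.
- by apply: measurableT_comp => //; apply: measurableT_comp.
- by apply: measurableT_comp => //; apply: measurableT_comp.
- by move=> x /=; rewrite SK TK SiK.
- by move=> x /=; rewrite SK TiK SiK.
- move=> A mA.
  have -> : (S \o T \o Si) @^-1` A = Si @^-1` (T @^-1` (S @^-1` A)) by [].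
  rewrite (@mp_inv _ _ _ mu _ _ hS); last by do 2 apply: mp_meas_pre => //.
  by rewrite Tp ?Sp //; apply: mp_meas_pre.
Qed.

End Part1.

Unset Implicit Arguments. Set Strict Implicit.

Theorem mainTheorem6 (R : realType) (d : measure_display) (X : measurableType d)
  (mu : probability X R) (Hstd : standard_atomless mu) :
  (forall (T Ti U Ui : X -> X) (c : X -> int),
     mp_aut mu T Ti -> aperiodic mu T Ti -> dyn_entropy mu T Ti = +oo%E ->
     mp_aut mu U Ui -> is_cocycle mu T Ti U c -> (shannon mu c < +oo)%E ->
     dyn_entropy mu U Ui = +oo%E)
  /\
  (forall (T1 T1i T2 T2i : X -> X),
     mp_aut mu T1 T1i -> aperiodic mu T1 T1i ->
     mp_aut mu T2 T2i -> aperiodic mu T2 T2i ->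
     shannon_oe mu T1 T1i T2 T2i ->
     ((dyn_entropy mu T1 T1i < +oo)%E <-> (dyn_entropy mu T2 T2i < +oo)%E)).
Proof.
split.
  by move=> T Ti U Ui c hT _ hinf hU hc hcf; apply: (part1 hT hU hc hcf hinf).
move=> T1 T1i T2 T2i h1 a1 h2 a2 [S [Si [hS /= [_ [c1 [hc1 f1]] [c2 [hc2 f2]]]]]].
have hT1' := mp_conj hS h1.
rewrite !ltey -(dyn_conj_eq T1 T1i hS); split.
  move=> hne; apply/eqP => hinf; move/eqP: hne; apply.
  exact: (part1 h2 hT1' hc1 f1 hinf).
move=> hne; apply/eqP => hinf; move/eqP: hne; apply.
exact: (part1 hT1' h2 hc2 f2 hinf).
Qed.
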